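(* Let $0<1/N_0,1/D_0,1/C_0\ll1/r\le1/3$ with $r\in\mathbb N$. Let $N\ge N_0$, $C\ge C_0$, $D\ge D_0$, and let $\mathcal H$ be an $N$-vertex linear multi-hypergraph with maximum degree $\Delta(\mathcal H)\le D$ in which every edge has size at most $r$. Then there is an $r$-uniform linear hypergraph $\mathcal H_{\mathrm{unif}}$ such that: (1) $\mathcal H\subseteq\mathcal H_{\mathrm{unif}}|_{V(\mathcal H)}$ and $\mathcal H_{\mathrm{unif}}|_{V(\mathcal H)}\setminus\mathcal H$ contains only singleton edges; (2) every $v\in V(\mathcal H_{\mathrm{unif}})$ satisfies $D-C\le d_{\mathcal H_{\mathrm{unif}}}(v)\le D$, and moreover every $v\in V(\mathcal H)$ with $d_{\mathcal H}(v)\ge D-C$ satisfies $d_{\mathcal H_{\mathrm{unif}}}(v)=d_{\mathcal H}(v)$; (3) $|V(\mathcal H_{\mathrm{unif}})|\le r(r-1)^2D^3N$.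
   Context: A multi-hypergraph has a finite vertex set and a multiset of nonempty edges. A linear multi-hypergraph is one in which any two distinct edges of size at least two intersect in at most one vertex (so only singleton edges may be repeated); a linear hypergraph has no repeated edges. Degree $d_{\mathcal H}(v)$ is the number of edges (with multiplicity) containing $v$; $r$-uniform means all edges have size $r$. For $S\subseteq V(\mathcal H')$, $\mathcal H'|_S$ is the multi-hypergraph on vertex set $S$ with edge multiset $\{e\cap S: e\in\mathcal H',\ e\cap S\ne\varnothing\}$. Hierarchy: $N_0,D_0,C_0$ sufficiently large in terms of $r$. *)

(* Defs.v *)
From mathcomp Require Import all_boot.
Set Implicit Arguments. Unset Strict Implicit. Unset Printing Implicit Defensive.

(* A multi-hypergraph on the finite vertex type T is given by its multiset of
   edges, represented as a list (order irrelevant, repetitions allowed). *)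
Notation mhg T := (seq {set T}) (only parsing).

Definition edges_nonempty (T : finType) (E : mhg T) : Prop :=
  forall e, e \in E -> e != set0.

Definition linear_mhg (T : finType) (E : mhg T) : Prop :=
  edges_nonempty E /\
  forall i j, i < size E -> j < size E -> i != j ->
    2 <= #|nth set0 E i| -> 2 <= #|nth set0 E j| ->
    #|nth set0 E i :&: nth set0 E j| <= 1.

Definition linear_hg (T : finType) (E : mhg T) : Prop :=
  linear_mhg E /\ uniq E.

Definition deg (T : finType) (E : mhg T) (v : T) : nat :=
  count (fun e : {set T} => v \in e) E.

Definition uniform (T : finType) (r : nat) (E : mhg T) : Prop :=
  forall e, e \in E -> #|e| = r.

(* restriction H'|_S where S is the image of the injection f : T -> U,
   expressed on vertex type T: edge multiset { e /\ S : e in H', e /\ S <> 0 } *)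
Definition restr (T U : finType) (f : T -> U) (E : mhg U) : mhg T :=
  [seq f @^-1: e | e : {set U} <- E & f @^-1: e != set0].

(* Main.v *)
Require Import Defs.
From mathcomp Require Import all_boot zify.
Set Implicit Arguments. Unset Strict Implicit. Unset Printing Implicit Defensive.

Lemma count_le1 (T : eqType) (P : pred T) (s : seq T) :
  uniq s -> {in s &, forall x y, P x -> P y -> x = y} -> count P s <= 1.
Proof.
elim: s => [|a s IH] //= /andP[an us] H.
have IH' : count P s <= 1.
  by apply: IH => // x y hx hy; apply: H; rewrite inE ?hx ?hy orbT.
case Pa: (P a) => //=.
rewrite (@eq_in_count _ _ pred0) ?count_pred0 // => x xs /=.
apply/negP => Px; move: an; rewrite (H a x) ?xs ?inE ?eqxx ?orbT //.
by rewrite xs orbT.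
Qed.

Lemma bnd r N D : 3 <= r -> 1 <= N -> 2 <= D -> N + r * (2 * r * N * D) <= r * (r - 1) ^ 2 * D ^ 3 * N.
Proof.
move=> hr hN hD.
have h1 : r + 1 <= (r - 1) ^ 2 by rewrite expnS expn1; nia.
have h2 : 2 * D <= D ^ 3 by rewrite !expnS expn0; nia.
have h3 : r * (r + 1) * (2 * D) <= r * (r - 1) ^ 2 * D ^ 3 by rewrite leq_mul // leq_mul.
have h4 : 1 + r * 2 * r * D <= r * (r + 1) * (2 * D) by nia.
have h5 := leq_mul (leq_trans h4 h3) (leqnn N).
nia.
Qed.

Section Cons.
Variables (r N D C : nat) (H : seq {set 'I_N}).
Hypotheses (r3 : 3 <= r) (N1 : 0 < N) (D2 : 2 <= D) (C1 : 1 <= C)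
  (Hlin : linear_mhg H) (Hdeg : forall v, deg H v <= D)
  (Hsz : forall e, e \in H -> #|e| <= r).

Definition p := 2 * r * N * D.
Definition n' := (N + r * p).-1.
Local Notation M := n'.+1.
Lemma MN : M = N + r * p.
Proof. rewrite /n' prednK //; lia. Qed.
Lemma leNM : N <= M.
Proof. rewrite MN; lia. Qed.
Definition old (v : 'I_N) : 'I_M := widen_ord leNM v.
Definition nw (x : nat) : 'I_M := inord (N + x).
Lemma nwK x : x < r * p -> nat_of_ord (nw x) = N + x.
Proof. move=> h; change (nat_of_ord (inord (n':=n') (N + x)) = N + x); rewrite inordK // MN; lia. Qed.
Lemma nw_inj x y : x < r * p -> y < r * p -> nw x = nw y -> x = y.
Proof. move=> hx hy /(congr1 (@nat_of_ord _)); rewrite !nwK //; lia. Qed.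

Lemma p_pos : 0 < p.
Proof. rewrite /p; nia. Qed.

Lemma sizeH : size H <= N * D.
Proof.
have e1 : \sum_(v : 'I_N) deg H v = \sum_(e <- H) #|e|.
  have dE v : deg H v = \sum_(e <- H) (v \in e : nat).
    by rewrite /deg -sum1_count big_mkcond; apply: eq_bigr => e _; case: (v \in e).
  rewrite (eq_bigr _ (fun v _ => dE v)).
  rewrite exchange_big /=; apply: eq_bigr => e _.
  by rewrite -sum1_card [RHS]big_mkcond.
have : \sum_(v : 'I_N) deg H v <= N * D.
rewrite -[N in N * D]card_ord -sum_nat_const; apply: leq_sum => v _; exact: Hdeg.
rewrite e1; apply: leq_trans.
rewrite -[size H]sum1_size big_seq_cond [X in _ <= X]big_seq_cond; apply: leq_sum => e /andP[eH _].
by rewrite card_gt0; apply: (proj1 Hlin).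
Qed.


Lemma decm m i y i' y' : 0 < m -> i * m + y = i' * m + y' -> y < m -> y' < m -> i = i' /\ y = y'.
Proof.
move=> m0 e hy hy'.
have h1 : (i * m + y) %/ m = i by rewrite divnMDl // divn_small ?addn0.
have h2 : (i' * m + y') %/ m = i' by rewrite divnMDl // divn_small ?addn0.
have h3 : (i * m + y) %% m = y by rewrite modnMDl modn_small.
have h4 : (i' * m + y') %% m = y' by rewrite modnMDl modn_small.
by split; [rewrite -h1 -h2 e | rewrite -h3 -h4 e].
Qed.

Lemma dec i y i' y' : i * p + y = i' * p + y' -> y < p -> y' < p -> i = i' /\ y = y'.
Proof.
move=> e hy hy'.
have h1 : (i * p + y) %/ p = i by rewrite divnMDl ?p_pos // divn_small ?addn0.
have h2 : (i' * p + y') %/ p = i' by rewrite divnMDl ?p_pos // divn_small ?addn0.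
have h3 : (i * p + y) %% p = y by rewrite modnMDl modn_small.
have h4 : (i' * p + y') %% p = y' by rewrite modnMDl modn_small.
by split; [rewrite -h1 -h2 e | rewrite -h3 -h4 e].
Qed.

Definition G := size H + N * D.
Lemma grp_bound g k : g < G -> k < r - 1 -> g * (r - 1) + k < p.
Proof.
move=> hg hk; have := sizeH; rewrite /G /p in hg * => sH.
have h1 : g.+1 <= 2 * N * D by lia.
have h2 : g.+1 * (r - 1) <= (2 * N * D) * (r - 1) by rewrite leq_mul.
have h3 := leq_mul (leqnn (2 * N * D)) (leq_subr 1 r).
nia.
Qed.
Lemma p_rp x : x < p -> x < r * p.
Proof. move=> h; apply: leq_trans h _; rewrite leq_pmull //; lia. Qed.

Definition grp g s : {set 'I_M} := [set nw (g * (r - 1) + nat_of_ord k) | k : 'I_s].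
Lemma mem_grp u g s : g < G -> s <= r - 1 -> u \in grp g s ->
  exists2 k, k < s & nat_of_ord u = N + (g * (r - 1) + k).
Proof.
move=> hg hs /imsetP[k _ ->]; exists (nat_of_ord k) => //.
by rewrite nwK // p_rp // grp_bound //; apply: leq_trans (ltn_ord k) hs.
Qed.
Lemma card_grp g s : g < G -> s <= r - 1 -> #|grp g s| = s.
Proof.
move=> hg hs; rewrite card_imset ?card_ord // => k1 k2 /nw_inj.
have b k : k < s -> g * (r - 1) + k < r * p.
  by move=> hk; rewrite p_rp // grp_bound //; apply: leq_trans hk hs.
move=> h; apply: ord_inj; have := h (b _ (ltn_ord k1)) (b _ (ltn_ord k2)); lia.
Qed.

Definition line s b : {set 'I_M} := [set nw (nat_of_ord i * p + (b + s * nat_of_ord i) %% p) | i : 'I_r].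
Lemma line_bound (i : 'I_r) y : y < p -> nat_of_ord i * p + y < r * p.
Proof. move=> hy; have := ltn_ord i; nia. Qed.
Lemma card_line s b : #|line s b| = r.
Proof.
rewrite card_imset ?card_ord // => i1 i2 /nw_inj h.
have := h (line_bound i1 (ltn_pmod _ p_pos)) (line_bound i2 (ltn_pmod _ p_pos)).
by move/dec => /(_ (ltn_pmod _ p_pos) (ltn_pmod _ p_pos)) [e _]; apply: ord_inj.
Qed.


Lemma old_lt v : nat_of_ord (old v) < N.
Proof. by rewrite /old /=. Qed.
Lemma old_notin_grp v g s : g < G -> s <= r - 1 -> old v \notin grp g s.
Proof.
move=> hg hs; apply/negP => /(mem_grp hg hs) [k _ e].
by have := old_lt v; rewrite e ltnNge leq_addr.
Qed.

Definition eH j := nth set0 H j.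
Definition need (v : 'I_N) := (D - C) - deg H v.
Definition lab0 := (nat + ('I_N * nat))%type.
Definition opart (a : lab0) : {set 'I_N} :=
  match a with inl j => eH j | inr vk => [set vk.1] end.
Definition gidx (a : lab0) : nat :=
  match a with inl j => j | inr vk => size H + vk.1 * D + vk.2 end.
Definition edge0 (a : lab0) : {set 'I_M} :=
  old @: opart a :|: grp (gidx a) (r - #|opart a|).
Definition lab := (lab0 + (nat * nat))%type.
Definition edge (l : lab) : {set 'I_M} :=
  match l with inl a => edge0 a | inr sb => line sb.1 sb.2 end.
Definition K := D.-1.
Definition LA := iota 0 (size H).
Definition LX := [seq (v, k) | v <- enum 'I_N, k <- iota 0 (need v)].
Definition LF := [seq (s, b) | s <- iota 0 K, b <- iota 0 p].
Definition L0 : seq lab0 := map inl LA ++ map inr LX.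
Definition L : seq lab := map inl L0 ++ map inr LF.
Definition Hu := map edge L.

Definition good0 (a : lab0) :=
  match a with inl j => j < size H | inr vk => vk.2 < need vk.1 end.
Lemma L0_good a : a \in L0 -> good0 a.
Proof.
rewrite mem_cat => /orP[/mapP[j] | /mapP[[v k]]].
  by rewrite mem_iota => /andP[_ hj] ->.
by move=> /allpairsPdep[v' [k' [_]]]; rewrite mem_iota => /andP[_ hk] [-> ->] ->.
Qed.
Lemma LF_good sb : sb \in LF -> sb.1 < K /\ sb.2 < p.
Proof.
by move=> /allpairsP[[s b] [/=]]; rewrite !mem_iota => /andP[_ ?] /andP[_ ?] ->.
Qed.

Lemma need_le v : need v <= D.
Proof. rewrite /need; lia. Qed.

Lemma good0_props a : good0 a ->
  [/\ gidx a < G, opart a != set0 & #|opart a| <= r].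
Proof.
case: a => [j | [v k]] /= h.
  split; first by rewrite /G; lia.
    by apply: (proj1 Hlin); rewrite mem_nth.
  by apply: Hsz; rewrite mem_nth.
split; last by rewrite cards1; lia.
  rewrite /G -addnA ltn_add2l; have := need_le v; have := ltn_ord v; nia.
by apply/set0Pn; exists v; rewrite inE.
Qed.

Lemma card_edge0 a : good0 a -> #|edge0 a| = r.
Proof.
move=> /good0_props [hg hn hr].
have h1 : 0 < #|opart a| by rewrite card_gt0.
have hs : r - #|opart a| <= r - 1 by lia.
have inj : injective old.
  move=> x y h; apply: ord_inj; exact: (congr1 (@nat_of_ord _) h).
rewrite /edge0 cardsU (card_imset _ inj).
rewrite card_grp //.
have -> : old @: opart a :&: grp (gidx a) (r - #|opart a|) = set0.
  apply/setP => u; rewrite !inE; apply/negP => /andP[/imsetP[v _ ->]].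
  by apply/negP/old_notin_grp.
by rewrite cards0 subn0 subnKC.
Qed.


Lemma old_inj : injective old.
Proof. move=> x y h; apply: ord_inj; exact: (congr1 (@nat_of_ord _) h). Qed.

Lemma grp_disj g g' s s' u : g < G -> g' < G -> s <= r - 1 -> s' <= r - 1 ->
  u \in grp g s -> u \in grp g' s' -> g = g'.
Proof.
move=> hg hg' hs hs' /(mem_grp hg hs) [k hk e] /(mem_grp hg' hs') [k' hk' e'].
have : g * (r - 1) + k = g' * (r - 1) + k' by move: e'; rewrite e => /eqP; rewrite eqn_add2l => /eqP.
move=> e2; have [] := decm (m := r - 1) _ e2 => //; lia.
Qed.

Lemma gidx_inj a a' : a \in L0 -> a' \in L0 -> gidx a = gidx a' -> a = a'.
Proof.
move=> /L0_good ha /L0_good ha'; case: a ha => [j | [v k]]; case: a' ha' => [j' | [v' k']] /= ha' ha.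
- by move=> ->.
- move=> e; move: ha; rewrite e; lia.
- move=> e; move: ha'; rewrite -e; lia.
move/eqP; rewrite -!addnA eqn_add2l => /eqP e2.
have hD : 0 < D by lia.
have hk : k < D by have := need_le v; lia.
have hk' : k' < D by have := need_le v'; lia.
by have [/ord_inj -> ->] := decm hD e2 hk hk'.
Qed.

Lemma opart_inter a a' : a \in L0 -> a' \in L0 -> a != a' ->
  #|opart a :&: opart a'| <= 1.
Proof.
move=> /L0_good ha /L0_good ha' ne.
case: a ha ne => [j | [v k]] ha ne; last first.
  by apply: leq_trans (subset_leq_card (subsetIl _ _)) _; rewrite cards1.
case: a' ha' ne => [j' | [v' k']] ha' ne; last first.
  by apply: leq_trans (subset_leq_card (subsetIr _ _)) _; rewrite cards1.
rewrite /=.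
case: (ltnP 1 #|eH j|) => c1; last first.
  exact: leq_trans (subset_leq_card (subsetIl _ _)) c1.
case: (ltnP 1 #|eH j'|) => c2; last first.
  exact: leq_trans (subset_leq_card (subsetIr _ _)) c2.
apply: (proj2 Hlin) => //.
Qed.

Lemma inter0 a a' : a \in L0 -> a' \in L0 -> a != a' ->
  #|edge0 a :&: edge0 a'| <= 1.
Proof.
move=> ha ha' ne.
have [hg hn hr] := good0_props (L0_good ha).
have [hg' hn' hr'] := good0_props (L0_good ha').
have hs : r - #|opart a| <= r - 1 by apply: leq_sub2l; rewrite card_gt0.
have hs' : r - #|opart a'| <= r - 1 by apply: leq_sub2l; rewrite card_gt0.
have sub : edge0 a :&: edge0 a' \subset old @: (opart a :&: opart a').
  apply/subsetP => u; rewrite !inE => /andP[/orP[/imsetP[v hv ->] | ug]].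
    rewrite (mem_imset _ _ old_inj) => /orP[hv' | hg2].
      by rewrite (mem_imset _ _ old_inj) inE hv hv'.
    by rewrite (negbTE (old_notin_grp v hg' hs')) in hg2.
  move=> /orP[/imsetP[v _ e] | ug'].
    by move: ug; rewrite e (negbTE (old_notin_grp _ hg hs)).
  by move: ne; rewrite (gidx_inj ha ha' (grp_disj hg hg' hs hs' ug ug')) eqxx.
apply: leq_trans (subset_leq_card sub) _.
apply: leq_trans (leq_imset_card _ _) _.
exact: opart_inter.
Qed.


Lemma mem_line u s b : u \in line s b ->
  exists i : 'I_r, u = nw (nat_of_ord i * p + (b + s * nat_of_ord i) %% p).
Proof. by move=> /imsetP[i _ ->]; exists i. Qed.

Lemma line_val (i : 'I_r) y : y < p -> nat_of_ord (nw (nat_of_ord i * p + y)) = N + (i * p + y).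
Proof. by move=> hy; rewrite nwK // line_bound. Qed.

Lemma AF_pt a u s b : a \in L0 -> u \in edge0 a -> u \in line s b ->
  u = nw (0 * p + (b + s * 0) %% p).
Proof.
move=> ha ue /mem_line [i e].
have [hg hn hr] := good0_props (L0_good ha).
have hs : r - #|opart a| <= r - 1 by apply: leq_sub2l; rewrite card_gt0.
have hy := ltn_pmod (b + s * i) p_pos.
have vu := line_val i hy; rewrite -e in vu.
move: ue; rewrite inE => /orP[/imsetP[v _ ev] | ug].
  by have := old_lt v; rewrite -ev vu ltnNge leq_addr.
have [k hk ek] := mem_grp hg hs ug.
have hk' : k < r - 1 by apply: leq_trans hk hs.
have eq : nat_of_ord i * p + (b + s * nat_of_ord i) %% p = gidx a * (r - 1) + k.
  by apply/eqP; rewrite -(eqn_add2l N) -vu -ek.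
have := grp_bound hg hk'; rewrite -eq => hlt.
have i0 : nat_of_ord i = 0.
  apply/eqP; rewrite -leqn0; move: hlt; case: (nat_of_ord i) => // n; rewrite mulSn; lia.
by rewrite e i0.
Qed.

Lemma slope s b s' b' i j : s < K -> s' < K -> b < p -> b' < p -> i < j -> j < r ->
  (b + s * i) %% p = (b' + s' * i) %% p -> (b + s * j) %% p = (b' + s' * j) %% p ->
  s = s' /\ b = b'.
Proof.
move=> hs hs' hb hb' ij jr e1 e2.
have jE : j = i + (j - i) by rewrite subnKC // ltnW.
move: e2; rewrite jE !mulnDr !addnA -modnDml e1 modnDml => /eqP.
rewrite eqn_modDl => /eqP.
have sd : forall t, t < K -> t * (j - i) < p.
  move=> t ht; rewrite /p /K in ht *.
  have h1 : t * (j - i) <= t * r by rewrite leq_mul2l; apply/orP; right; apply: leq_trans (leq_subr _ _) (ltnW jr).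
  apply: leq_ltn_trans h1 _; have h2 : t * r < D * r by rewrite ltn_mul2r; apply/andP; split; lia.
  have h3 : D * r <= 2 * r * N * D by nia.
  lia.
rewrite !modn_small ?sd // => /eqP; rewrite eqn_mul2r => /orP[/eqP | /eqP ss]; first lia.
split => //; move: e1; rewrite ss => /eqP; rewrite eqn_modDr !modn_small //.
by move=> /eqP.
Qed.

Lemma FF_inter s b s' b' : s < K -> s' < K -> b < p -> b' < p -> (s, b) != (s', b') ->
  #|line s b :&: line s' b'| <= 1.
Proof.
move=> hs hs' hb hb' ne; apply/card_le1_eqP => x y.
have key : forall z, z \in line s b :&: line s' b' -> exists i : 'I_r,
    z = nw (nat_of_ord i * p + (b + s * nat_of_ord i) %% p) /\
    (b + s * nat_of_ord i) %% p = (b' + s' * nat_of_ord i) %% p.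
  move=> z; rewrite inE => /andP[/mem_line[i ei] /mem_line[i' ei']].
  exists i; split => //.
  have := ei; rewrite ei' => /nw_inj.
  have hy := ltn_pmod (b + s * i) p_pos; have hy' := ltn_pmod (b' + s' * i') p_pos.
  move=> /(_ (line_bound _ hy') (line_bound _ hy)) /dec /(_ hy' hy) [ii e].
  by rewrite ii in e; rewrite -e.
move=> /key [i [-> ei]] /key [j [-> ej]].
case: (ltngtP (nat_of_ord i) (nat_of_ord j)) => [ij | ji | /ord_inj -> //].
  have [e1 e2] := slope hs hs' hb hb' ij (ltn_ord j) ei ej.
  by move: ne; rewrite e1 e2 eqxx.
have [e1 e2] := slope hs hs' hb hb' ji (ltn_ord i) ej ei.
by move: ne; rewrite e1 e2 eqxx.
Qed.


Lemma uniq_sum (A B : eqType) (s : seq A) (t : seq B) :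
  uniq s -> uniq t -> uniq (map (@inl A B) s ++ map inr t).
Proof.
move=> us ut; rewrite cat_uniq !map_inj_uniq //; last by move=> x y [].
rewrite us ut /= andbT; apply/hasPn => z /mapP[y _ ->]; apply/mapP => -[x _].
  by [].
by move=> x y [].
Qed.

Lemma L0_uniq : uniq L0.
Proof.
apply: uniq_sum; first exact: iota_uniq.
apply: allpairs_uniq_dep; first exact: enum_uniq.
  by move=> v _; exact: iota_uniq.
move=> [v k] [v' k'] _ _ /= [e1 e2]; move: k e2; rewrite -e1 => k ->.
by [].
Qed.

Lemma L_uniq : uniq L.
Proof.
apply: uniq_sum; last first.
  apply: allpairs_uniq; rewrite ?iota_uniq // => [[x1 y1] [x2 y2]] _ _ [-> ->].
  by [].
exact: L0_uniq.
Qed.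

Lemma LF_pt sb : sb \in LF -> sb.1 < K /\ sb.2 < p.
Proof. exact: LF_good. Qed.

Lemma card_edge l : l \in L -> #|edge l| = r.
Proof.
rewrite mem_cat => /orP[/mapP[a ha ->] | /mapP[sb _ ->]] /=.
  exact: card_edge0 (L0_good ha).
exact: card_line.
Qed.

Lemma edge_inter l l' : l \in L -> l' \in L -> l != l' -> #|edge l :&: edge l'| <= 1.
Proof.
have AF : forall a sb, a \in L0 -> #|edge0 a :&: line sb.1 sb.2| <= 1.
  move=> a [s b] ha; apply/card_le1_eqP => x y; rewrite !in_setI => /andP[x1 x2] /andP[y1 y2].
  by rewrite (AF_pt ha x1 x2) (AF_pt ha y1 y2).
rewrite !mem_cat => /orP[/mapP[a ha ->] | /mapP[sb hsb ->]] /orP[/mapP[a' ha' ->] | /mapP[sb' hsb' ->]] ne /=.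
- apply: inter0 => //; by apply: contra ne => /eqP ->.
- exact: AF.
- by rewrite setIC AF.
case: sb hsb ne => s b hsb ne; case: sb' hsb' ne => s' b' hsb' ne.
have [? ?] := LF_good hsb; have [? ?] := LF_good hsb'.
by apply: FF_inter => //; apply: contra ne => /eqP ->.
Qed.

Lemma Hu_lin : linear_hg Hu /\ uniform r Hu.
Proof.
have r2 : 1 < r by lia.
have ce : forall e, e \in Hu -> #|e| = r by move=> e /mapP[l hl ->]; exact: card_edge.
split; last exact: ce.
split; last first.
  rewrite map_inj_in_uniq ?L_uniq // => l l' hl hl' e.
  apply/eqP/negPn/negP => ne; have := edge_inter hl hl' ne.
  by rewrite e setIid card_edge //; lia.
split.
  by move=> e he; rewrite -card_gt0 ce //; lia.
move=> i j hi hj ne _ _.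
have l0 : lab := inr (0, 0).
rewrite size_map in hi hj.
rewrite (nth_map l0) // (nth_map l0) //.
apply: edge_inter; rewrite ?mem_nth //.
by rewrite nth_uniq ?L_uniq.
Qed.


Lemma pre_edge0 a : a \in L0 -> old @^-1: edge0 a = opart a.
Proof.
move=> ha; have [hg hn hr] := good0_props (L0_good ha).
have hs : r - #|opart a| <= r - 1 by apply: leq_sub2l; rewrite card_gt0.
apply/setP => v; rewrite !inE (mem_imset _ _ old_inj).
by rewrite (negbTE (old_notin_grp v hg hs)) orbF.
Qed.

Lemma pre_line s b : old @^-1: line s b = set0.
Proof.
apply/setP => v; rewrite !inE; apply/negP => /mem_line [i e].
have := old_lt v; rewrite e line_val ?ltn_pmod ?p_pos //.
by rewrite ltnNge leq_addr.
Qed.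

Definition extra := [seq [set vk.1] | vk <- LX].

Lemma restr_Hu : restr old Hu = H ++ extra.
Proof.
rewrite /restr /Hu filter_map /L filter_cat map_cat.
have f1 : [seq x <- [seq inl i | i <- L0] | preim edge (fun e => old @^-1: e != set0) x]
          = [seq inl i | i <- L0] :> seq lab.
  apply/all_filterP; apply/allP => l /mapP[a ha ->] /=.
  by rewrite pre_edge0 //; have [] := good0_props (L0_good ha).
have f2 : [seq x <- [seq inr i | i <- LF] | preim edge (fun e => old @^-1: e != set0) x]
          = [::] :> seq lab.
  rewrite (@eq_in_filter _ _ pred0) ?filter_pred0 // => l /mapP[[s b] _ ->] /=.
  by rewrite pre_line eqxx.
rewrite f1 f2 cats0 -!map_comp.
rewrite (_ : [seq _ | _ <- L0] = map opart L0); last first.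
  by apply/eq_in_map => a ha /=; rewrite pre_edge0.
rewrite /L0 map_cat -!map_comp /extra; congr (_ ++ _).
by rewrite -[RHS](mkseq_nth set0).
Qed.


Lemma count_shift c y : y < p -> count (fun b => (b + c) %% p == y) (iota 0 p) = 1.
Proof.
move=> hy; apply/eqP; rewrite eqn_leq; apply/andP; split.
  apply: count_le1; first exact: iota_uniq.
  move=> b b' hb hb'; rewrite mem_iota add0n in hb; rewrite mem_iota add0n in hb'.
  move=> /eqP e1 /eqP e2.
  have : (b + c) %% p == (b' + c) %% p by rewrite e1 e2.
  by rewrite eqn_modDr !modn_small // => /eqP.
rewrite -has_count; apply/hasP; exists ((y + (p - c %% p)) %% p).
  by rewrite mem_iota /= ltn_pmod ?p_pos.
have hc := ltn_pmod c p_pos.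
rewrite modnDml -modnDmr -addnA subnK ?(ltnW hc) // modnDr modn_small //.
Qed.

Lemma in_line (i : 'I_r) y s b : y < p ->
  (nw (nat_of_ord i * p + y) \in line s b) = ((b + s * nat_of_ord i) %% p == y).
Proof.
move=> hy; apply/idP/eqP.
  move=> /mem_line [i' /nw_inj].
  have hy' := ltn_pmod (b + s * i') p_pos.
  move=> /(_ (line_bound _ hy) (line_bound _ hy')) /dec /(_ hy hy') [ii ->].
  by rewrite ii.
move=> <-; apply/imsetP; exists i => //.
Qed.

Lemma LX_flat : LX = flatten [seq [seq (v, k) | k <- iota 0 (need v)] | v <- enum 'I_N].
Proof. by []. Qed.
Lemma LF_flat : LF = flatten [seq [seq (s, b) | b <- iota 0 p] | s <- iota 0 K].
Proof. by []. Qed.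

Lemma count_LX v : count (fun vk : 'I_N * nat => v \in [set vk.1]) LX = need v.
Proof.
rewrite LX_flat count_flatten sumnE !big_map /=.
rewrite (eq_bigr (fun v' => if v' == v then need v' else 0)); last first.
  move=> v' _; rewrite count_map /preim /=.
  case: (v' =P v) => [-> | ne].
    by rewrite (@eq_count _ _ predT) ?count_predT ?size_iota // => k /=; rewrite inE eqxx.
  rewrite (@eq_count _ _ pred0) ?count_pred0 // => k /=; rewrite inE.
  by apply/negP => /eqP e; apply: ne.
by rewrite -big_mkcond big_pred1_eq.
Qed.

Lemma count_LF (i : 'I_r) y : y < p ->
  count (fun sb : nat * nat => nw (nat_of_ord i * p + y) \in line sb.1 sb.2) LF = K.
Proof.
move=> hy; rewrite LF_flat count_flatten -map_comp.
rewrite (_ : [seq _ | _ <- _] = [seq 1 | s <- iota 0 K]).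
  by rewrite sumnE big_map sum1_size size_iota.
apply/eq_in_map => s _; rewrite count_map /preim /=.
rewrite (@eq_count _ _ (fun b => (b + s * nat_of_ord i) %% p == y)) ?count_shift //.
by move=> b /=; rewrite in_line.
Qed.

Lemma deg_Hu_split u : deg Hu u =
  count (fun a => u \in edge0 a) L0 + count (fun sb : nat * nat => u \in line sb.1 sb.2) LF.
Proof. by rewrite /deg /Hu count_map /L count_cat !count_map. Qed.

Lemma deg_old v : deg Hu (old v) = deg H v + need v.
Proof.
rewrite deg_Hu_split.
have -> : count (fun sb : nat * nat => old v \in line sb.1 sb.2) LF = 0.
  rewrite (@eq_count _ _ pred0) ?count_pred0 // => -[s b] /=.
  by apply/negP => h; move: (pre_line s b) => /setP /(_ v); rewrite !inE h.
rewrite addn0.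
rewrite (@eq_in_count _ _ (fun a => v \in opart a)); last first.
  move=> a ha /=; have := pre_edge0 ha; move/setP/(_ v); rewrite in_set => -> //.
rewrite /L0 count_cat !count_map /preim /= count_LX; congr (_ + _).
rewrite /LA /deg -[in RHS](mkseq_nth set0 H) /mkseq count_map.
by [].
Qed.

Lemma deg_new (u : 'I_M) : N <= u -> D.-1 <= deg Hu u <= D.
Proof.
move=> hu.
have hx : u - N < r * p by have := ltn_ord u; have := MN; lia.
have hi : (u - N) %/ p < r by rewrite ltn_divLR ?p_pos // mulnC.
have hy := ltn_pmod (u - N) p_pos.
have ue : u = nw (nat_of_ord (Ordinal hi) * p + (u - N) %% p).
  apply: ord_inj; rewrite nwK /= -?divn_eq; first lia.
  exact: hx.
have cF : count (fun sb : nat * nat => u \in line sb.1 sb.2) LF = K by rewrite ue count_LF.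
rewrite deg_Hu_split cF.
have c1 : count (fun a => u \in edge0 a) L0 <= 1.
  apply: count_le1; first exact: L0_uniq.
  move=> a a' ha ha'.
  have [hg hn hr] := good0_props (L0_good ha).
  have [hg' hn' hr'] := good0_props (L0_good ha').
  have hs : r - #|opart a| <= r - 1 by apply: leq_sub2l; rewrite card_gt0.
  have hs' : r - #|opart a'| <= r - 1 by apply: leq_sub2l; rewrite card_gt0.
  rewrite /= !in_setU => /orP[/imsetP[v _ ev] | ug].
    by move: hu; rewrite ev leqNgt old_lt.
  move=> /orP[/imsetP[v _ ev] | ug'].
    by move: hu; rewrite ev leqNgt old_lt.
  exact: gidx_inj ha ha' (grp_disj hg hg' hs hs' ug ug').
rewrite /K; apply/andP; split; first exact: leq_addl.
by move: c1; case: (count _ _) => [|[|]] //= _; lia.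
Qed.


Lemma main_cons :
  exists (M : nat) (leNM : N <= M) (Hu : mhg 'I_M),
    [/\ linear_hg Hu /\ uniform r Hu,
        (exists extra : mhg 'I_N,
            perm_eq (restr (widen_ord leNM) Hu) (H ++ extra) /\
            (forall e, e \in extra -> #|e| = 1)),
        (forall v : 'I_M, D - C <= deg Hu v <= D),
        (forall v : 'I_N, D - C <= deg H v ->
            deg Hu (widen_ord leNM v) = deg H v)
      & M <= r * (r - 1) ^ 2 * D ^ 3 * N].
Proof.
exists M, leNM, Hu; split.
- exact: Hu_lin.
- exists extra; split.
    by have -> : restr (widen_ord leNM) Hu = H ++ extra by exact: restr_Hu.
  by move=> e /mapP[vk _ ->]; rewrite cards1.
- move=> u; case: (ltnP u N) => hu.
    have -> : u = old (Ordinal hu) by apply: ord_inj.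
    rewrite deg_old /need; have := Hdeg (Ordinal hu).
    move: (deg H (Ordinal hu)) => d hd; lia.
  have := deg_new hu; lia.
- move=> v hv; have := deg_old v; rewrite /need.
  have -> : D - C - deg H v = 0 by apply/eqP; rewrite subn_eq0.
  by rewrite addn0.
rewrite MN /p; exact: bnd.
Qed.

End Cons.

Theorem lemma4p4 :
  forall r : nat, 3 <= r ->
  exists N0 D0 C0 : nat,
  forall (N C D : nat), N0 <= N -> C0 <= C -> D0 <= D ->
  forall H : mhg 'I_N,
    linear_mhg H ->
    (forall v : 'I_N, deg H v <= D) ->
    (forall e, e \in H -> #|e| <= r) ->
  exists (M : nat) (leNM : N <= M) (Hu : mhg 'I_M),
    [/\ linear_hg Hu /\ uniform r Hu,
        (* (1) Hu|_{V(H)} = H + (a multiset of singleton edges) *)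
        (exists extra : mhg 'I_N,
            perm_eq (restr (widen_ord leNM) Hu) (H ++ extra) /\
            (forall e, e \in extra -> #|e| = 1)),
        (* (2) *)
        (forall v : 'I_M, D - C <= deg Hu v <= D),
        (forall v : 'I_N, D - C <= deg H v ->
            deg Hu (widen_ord leNM v) = deg H v)
      & (* (3) *)
        M <= r * (r - 1) ^ 2 * D ^ 3 * N].
Proof.
move=> r hr; exists 1, 2, 1 => N C D hN hC hD H hlin hdeg hsz.
exact: (@main_cons r N D C H).
Qed.
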